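(* Let $U$ be a compatible basis transform of $\mathbb{R}^{\{-1,1\}^n}$. Then $\deg_U(f)=\deg(f)$ for every $f\in\mathbb{R}^{\{-1,1\}^n}$.
   Context: $\mathbb{R}^{\{-1,1\}^n}$ is the real vector space of all functions $\{-1,1\}^n\to\mathbb{R}$; each $f$ has a unique expansion $f=\sum_{S\subseteq[n]}\hat f(S)\chi_S$, $\chi_S(x)=\prod_{i\in S}x_i$, and $\deg(f)=\max\{|S|:\hat f(S)\ne0\}$. A basis transform is an invertible linear map $U$ on $\mathbb{R}^{\{-1,1\}^n}$; the degree of $f$ under $U$ is $\deg_U(f):=\max\{\deg(U^{-1}(\chi_S)):\hat f(S)\ne0\}$. $U$ is compatible if $\deg(U(\chi_S))=|S|$ for every $S\subseteq[n]$. *)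

(* Defs.v *)
From HB Require Import structures.
From mathcomp Require Import all_boot all_order all_algebra.
Set Implicit Arguments. Unset Strict Implicit. Unset Printing Implicit Defensive.
Import Order.TTheory GRing.Theory Num.Theory.
Local Open Scope ring_scope.

(* Points of {-1,1}^n are encoded as boolean vectors b : {ffun 'I_n -> bool},
   with coordinate x_i = (-1)^(b i), i.e. true |-> -1, false |-> 1. *)
Notation cube n := {ffun 'I_n -> bool}.

Definition xcoord (R : numFieldType) n (x : cube n) (i : 'I_n) : R :=
  if x i then -1 else 1.

Notation bfun R n := {ffun cube n -> R}.

Definition chi (R : numFieldType) n (S : {set 'I_n}) : bfun R n :=
  [ffun x => \prod_(i in S) xcoord R x i].

(* Fourier coefficient hat f(S) = 2^{-n} sum_x f(x) chi_S(x); these are the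
   (unique) coefficients of the expansion f = sum_S hat f(S) chi_S. *)
Definition fcoef (R : numFieldType) n (f : bfun R n) (S : {set 'I_n}) : R :=
  (2 ^+ n)^-1 * \sum_(x : cube n) f x * chi R S x.

Definition fdeg (R : numFieldType) n (f : bfun R n) : nat :=
  \max_(S : {set 'I_n} | fcoef f S != 0) #|S|.

Definition fdegU (R : numFieldType) n (Uinv : bfun R n -> bfun R n)
  (f : bfun R n) : nat :=
  \max_(S : {set 'I_n} | fcoef f S != 0) fdeg (Uinv (chi R S)).

Definition compatible (R : numFieldType) n (U : bfun R n -> bfun R n) : Prop :=
  forall S : {set 'I_n}, fdeg (U (chi R S)) = #|S|.

Definition fscale (R : numFieldType) n (a : R) (f : bfun R n) : bfun R n :=
  [ffun x => a * f x].

(* Main.v *)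
Require Import Defs.
From HB Require Import structures.
From mathcomp Require Import all_boot all_order all_algebra.
From mathcomp Require Import reals.
Import GRing.Theory Num.Theory.
Local Open Scope ring_scope.

Section Fourier.
Variables (R : realType) (n : nat).

Definition sg (b : bool) : R := if b then -1 else 1.

Lemma sum_cube (G : 'I_n -> bool -> R) :
  \sum_(x : cube n) \prod_i G i (x i) = \prod_i (G i true + G i false).
Proof.
rewrite -(bigA_distr_bigA (fun i b => G i b)) /=; idtac.
apply: eq_bigr => i _; exact: (big_bool _ (G i)).
Qed.

Lemma chiE (S : {set 'I_n}) (x : cube n) :
  chi R S x = \prod_i (if i \in S then sg (x i) else 1).
Proof. by rewrite ffunE -big_mkcond. Qed.

Lemma two_neq0 : (2 : R) ^+ n != 0.
Proof. by rewrite expf_neq0 // pnatr_eq0. Qed.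

Lemma orth (S T : {set 'I_n}) :
  \sum_(x : cube n) chi R T x * chi R S x = if T == S then 2 ^+ n else 0.
Proof.
under eq_bigr => x _ do rewrite !chiE -big_split /=.
rewrite (sum_cube (fun i b => (if i \in T then sg b else 1) * (if i \in S then sg b else 1))).
case: eqP => [->|/eqP neq].
  rewrite -[in RHS](card_ord n) -prodr_const; apply: eq_bigr => i _.
  by case: (i \in S); rewrite /sg ?mulN1r ?opprK ?mul1r.
have [i Hi] : exists i, (i \in T) != (i \in S).
  apply/existsP; apply: contraR neq => /existsPn H.
  by apply/eqP/setP => i; move: (H i); rewrite negbK => /eqP.
rewrite (bigD1 i) //=; move: Hi.
by case: (i \in T); case: (i \in S) => //= _; rewrite /sg ?mulN1r ?mul1r ?mulr1 ?opprK ?addrN ?subrr ?(addrC 1) ?addNr mul0r.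
Qed.

Lemma fcoef_chi (S T : {set 'I_n}) : fcoef (chi R T) S = (T == S)%:R.
Proof.
rewrite /fcoef orth; case: eqP => _; last by rewrite mulr0.
by rewrite mulVf // two_neq0.
Qed.


Definition W := {ffun cube n -> R^o}.
Definition chiW (S : {set 'I_n}) : W := chi R S.

Lemma fcoefD (f g : W) S : fcoef (f + g) S = fcoef f S + fcoef g S.
Proof.
rewrite /fcoef -mulrDr; congr (_ * _); rewrite -big_split /=.
by apply: eq_bigr => x _; rewrite ffunE mulrDl.
Qed.

Lemma fcoefZ a (f : W) S : fcoef (a *: f) S = a * fcoef f S.
Proof.
rewrite /fcoef [RHS]mulrCA [in RHS]mulr_sumr; congr (_ * _).
by apply: eq_bigr => x _; rewrite ffunE mulrA.
Qed.

Lemma fcoef0 S : fcoef (0 : W) S = 0.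
Proof. by rewrite -(scale0r (0 : W)) fcoefZ mul0r. Qed.

Lemma fcoef_sum (I : Type) (r : seq I) (P : pred I) (F : I -> W) S :
  fcoef (\sum_(i <- r | P i) F i) S = \sum_(i <- r | P i) fcoef (F i) S.
Proof. exact: (big_morph (fun f : W => fcoef f S) (fun f g => fcoefD f g S) (fcoef0 S)). Qed.

Lemma kern (x y : cube n) :
  \sum_(S : {set 'I_n}) chi R S y * chi R S x = if y == x then 2 ^+ n else 0.
Proof.
have -> : \sum_(S : {set 'I_n}) chi R S y * chi R S x =
   \sum_(S : {set 'I_n}) \prod_i (if i \in S then sg (y i) * sg (x i) else 1).
  apply: eq_bigr => S _; rewrite !chiE -big_split /=; apply: eq_bigr => i _.
  by case: (i \in S); rewrite ?mulr1.
rewrite -(@bigA_distr _ _ 1 _ _ _ (fun i => sg (y i) * sg (x i)) (fun _ => 1)) /=.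
case: eqP => [->|/eqP neq].
  rewrite -[in RHS](card_ord n) -prodr_const; apply: eq_bigr => i _.
  by case: (x i); rewrite /sg ?mulN1r ?opprK ?mul1r.
have [i Hi] : exists i, y i != x i.
  apply/existsP; apply: contraR neq => /existsPn H.
  by apply/eqP/ffunP => i; move: (H i); rewrite negbK => /eqP.
rewrite (bigD1 i) //=; move: Hi.
by case: (y i); case: (x i) => //= _; rewrite /sg ?mulN1r ?mul1r ?mulr1 ?opprK ?addNr ?subrr mul0r.
Qed.

Lemma inversion (f : W) : f = \sum_(S : {set 'I_n}) fcoef f S *: chiW S.
Proof.
apply/ffunP => x; rewrite sum_ffunE.
have sE : forall (a b : R^o), a *: b = a * b by [].
under eq_bigr => S _ do rewrite ffunE sE /fcoef -mulrA mulr_suml.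
rewrite -mulr_sumr exchange_big /=.
have E : forall y, \sum_(S : {set 'I_n}) f y * chi R S y * chiW S x = f y * (if y == x then 2 ^+ n else 0).
  by move=> y; rewrite -kern mulr_sumr; apply: eq_bigr => S _; rewrite /chiW mulrA.
under eq_bigr => y _ do rewrite E.
rewrite (bigD1 x) //= eqxx big1 ?addr0; last by move=> y /negbTE ->; rewrite mulr0.
by rewrite mulrCA mulVf ?mulr1 // two_neq0.
Qed.



Lemma fdeg_leP (f : bfun R n) d :
  reflect (forall S, fcoef f S != 0 -> (#|S| <= d)%N) (fdeg f <= d)%N.
Proof. exact: bigmax_leqP. Qed.

Lemma fdeg_chi (S : {set 'I_n}) : fdeg (chi R S) = #|S|.
Proof.
apply/eqP; rewrite eqn_leq; apply/andP; split.
  apply/fdeg_leP => T; rewrite fcoef_chi; have [<-|_] := eqVneq S T => //.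
  by rewrite eqxx.
by apply: (leq_bigmax_cond S); rewrite fcoef_chi eqxx oner_neq0.
Qed.

Definition V (d : nat) : {vspace W} :=
  <<[seq chiW A | A <- enum [set A : {set 'I_n} | (#|A| <= d)%N]]>>%VS.

Lemma memV d (f : W) : (f \in V d) = (fdeg f <= d)%N.
Proof.
apply/idP/idP.
  move=> /coord_span ->; apply/fdeg_leP => S; rewrite fcoef_sum.
  apply: contraR; rewrite -ltnNge => HS.
  rewrite big1 // => i _; rewrite fcoefZ.
  set t := map_tuple _ _.
  have : t`_i \in (t : seq W) by apply: mem_nth; rewrite size_tuple.
  rewrite /= => /mapP [T]; rewrite mem_enum inE => HT ->.
  rewrite /chiW fcoef_chi; case: eqP => [E|]; last by rewrite mulr0.
  by move: HT; rewrite E leqNgt HS.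
move=> Hf; rewrite [f]inversion; apply: memv_suml => S _.
have [->|nz] := eqVneq (fcoef f S) 0; first by rewrite scale0r mem0v.
apply: memvZ; apply: memv_span; apply/mapP; exists S => //.
by rewrite mem_enum inE; move/fdeg_leP: Hf; apply.
Qed.

End Fourier.

Section Main.
Variables (R : realType) (n : nat) (U Uinv : bfun R n -> bfun R n).
Hypothesis U_lin : forall (a : R) (f g : bfun R n), U (fscale a f + g) = fscale a (U f) + U g.
Hypotheses (UK : cancel U Uinv) (UinvK : cancel Uinv U) (Ucomp : compatible U).

Definition UW : W R n -> W R n := U.
Lemma Ulinear : linear UW.
Proof. move=> a f g. have E: forall h : W R n, fscale a h = a *: h by move=> h; apply/ffunP=> x; rewrite !ffunE.
by rewrite /UW -!E U_lin. Qed.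
HB.instance Definition _ := GRing.isLinear.Build R (W R n) (W R n) *:%R UW Ulinear.

Definition Uf : 'End(W R n) := linfun UW.

Lemma UfE v : Uf v = U v.
Proof. by rewrite lfunE. Qed.

Lemma UV d : (Uf @: V R n d)%VS = V R n d.
Proof.
apply/eqP; rewrite eqEdim; apply/andP; split.
  rewrite limg_span; apply/span_subvP => v /mapP [w /mapP [S]].
  rewrite mem_enum inE => HS -> ->.
  by rewrite UfE memV /chiW Ucomp.
rewrite limg_dim_eq //.
have /eqP -> : lker Uf == 0%VS.
  by apply/lker0P => v w; rewrite !UfE => /(can_inj UK).
by rewrite capv0.
Qed.

Lemma Uinv_V d (f : W R n) : f \in V R n d -> Uinv f \in V R n d.
Proof.
rewrite -{1}UV => /memv_imgP [v Hv E].
by rewrite E UfE UK.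
Qed.

Lemma U_V d (f : W R n) : f \in V R n d -> U f \in V R n d.
Proof. by move=> H; have := memv_img Uf H; rewrite UV UfE. Qed.

Lemma fdeg_Uinv_chi (S : {set 'I_n}) : fdeg (Uinv (chi R S)) = #|S|.
Proof.
apply/eqP; rewrite eqn_leq; apply/andP; split.
  rewrite -(@memV R n _ (Uinv (chiW R n S))); apply: Uinv_V.
  by rewrite memV fdeg_chi.
have H : Uinv (chiW R n S) \in V R n (fdeg (Uinv (chi R S))) by rewrite memV.
by move: (U_V _ _ H); rewrite UinvK memV fdeg_chi.
Qed.

End Main.

Theorem mainTheorem15 (R : realType) (n : nat)
  (U Uinv : bfun R n -> bfun R n)
  (U_lin : forall (a : R) (f g : bfun R n), U (fscale a f + g) = fscale a (U f) + U g)
  (UK : cancel U Uinv) (UinvK : cancel Uinv U)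
  (Ucomp : compatible U) :
  forall f : bfun R n, fdegU Uinv f = fdeg f.
Proof.
move=> f; rewrite /fdegU /fdeg; apply: eq_bigr => S _.
exact: fdeg_Uinv_chi.
Qed.
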